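(* Let $0<p<1$ and let $k\ge 1$ be an integer. A coin showing heads with probability $p$ and tails with probability $1-p$ is flipped independently until $\mathrm{H}^k\mathrm{T}$ ($k$ heads followed by a tails) first appears as consecutive flips; let $Y$ be the number of flips. Then \[ E(Y) = \frac{1}{(1-p)p^k},\qquad E(Y^2) = \frac{2}{(1-p)^2 p^{2k}} - \frac{2k+1}{(1-p) p^k}, \] \[ E(Y^3) = \frac{6}{(1-p)^3 p^{3k}} - \frac{12k+6}{(1-p)^2 p^{2k}} + \frac{3k^2+3k+1}{(1-p) p^k}, \] \[ E(Y^4) = \frac{24}{(1-p)^4 p^{4k}} - \frac{72k+36}{(1-p)^3 p^{3k}} + \frac{48k^2+48k+14}{(1-p)^2 p^{2k}} - \frac{4k^3+6k^2+4k+1}{(1-p) p^k}, \] \[ E(Y^5) = \frac{120}{(1-p)^5 p^{5k}} - \frac{240(2k+1)}{(1-p)^4 p^{4k}} + \frac{30(18k^2+18k+5)}{(1-p)^3 p^{3k}} - \frac{10(16k^3+24k^2+14k+3)}{(1-p)^2 p^{2k}} + \frac{(k+1)^5-k^5}{(1-p) p^k}. \] *)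

(* Defs.v *)
From Stdlib Require Import Reals List Bool Arith.
From Coquelicot Require Import Coquelicot.
Open Scope R_scope.

(* A word of coin flips: true = heads (prob p), false = tails (prob 1-p). *)
Fixpoint words (n : nat) : list (list bool) :=
  match n with
  | O => nil :: nil
  | S n' => map (cons true) (words n') ++ map (cons false) (words n')
  end.

Definition weight (p : R) (w : list bool) : R :=
  fold_right Rmult 1 (map (fun b : bool => if b then p else 1 - p) w).

Definition pat (k : nat) : list bool := repeat true k ++ (false :: nil).

Definition list_bool_eqb (u v : list bool) : bool :=
  if list_eq_dec bool_dec u v then true else false.

Definition ends_with_pat (k : nat) (w : list bool) : bool :=
  Nat.leb (S k) (length w) &&
  list_bool_eqb (skipn (length w - S k) w) (pat k).

Definition first_hit (k : nat) (w : list bool) : bool :=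
  ends_with_pat k w &&
  forallb (fun j => negb (ends_with_pat k (firstn j w))) (seq 0 (length w)).

Definition probY (p : R) (k n : nat) : R :=
  fold_right Rplus 0 (map (weight p) (filter (first_hit k) (words n))).

Definition moment_is (p : R) (k m : nat) (l : R) : Prop :=
  is_series (fun n : nat => (INR n) ^ m * probY p k n) l.

Example first_hit_ex : first_hit 1 (false :: true :: true :: false :: nil) = true.
Proof. reflexivity. Qed.
Example first_hit_ex2 : first_hit 1 (true :: false :: true :: false :: nil) = false.
Proof. reflexivity. Qed.

(* Main.v *)
Require Import Defs.
From Stdlib Require Import Reals List Arith Lia Lra Bool.
From Coquelicot Require Import Coquelicot.
Open Scope R_scope.
Definition sumw {A} (f : A -> R) (l : list A) : R := fold_right Rplus 0 (map f l).

Lemma sumw_app {A} (f : A -> R) l1 l2 : sumw f (l1 ++ l2) = sumw f l1 + sumw f l2.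
Proof. unfold sumw; induction l1; simpl; [lra|rewrite IHl1; lra]. Qed.
Lemma sumw_map {A B} (f : B -> R) (g : A -> B) l : sumw f (map g l) = sumw (fun x => f (g x)) l.
Proof. unfold sumw; induction l; simpl; [lra|rewrite IHl; lra]. Qed.
Lemma sumw_ext_in {A} (f g : A -> R) l : (forall x, In x l -> f x = g x) -> sumw f l = sumw g l.
Proof. unfold sumw; induction l; simpl; intros H; [lra|rewrite IHl, (H a); auto]. Qed.
Lemma sumw_filter {A} (f : A -> R) P l :
  sumw f (filter P l) = sumw (fun x => if P x then f x else 0) l.
Proof. unfold sumw; induction l; simpl; [lra|destruct (P a); simpl; rewrite IHl; lra]. Qed.
Lemma sumw_scal {A} (f : A -> R) c l : sumw (fun x => c * f x) l = c * sumw f l.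
Proof. unfold sumw; induction l; simpl; [lra|rewrite IHl; lra]. Qed.
Lemma sumw_plus {A} (f g : A -> R) l : sumw (fun x => f x + g x) l = sumw f l + sumw g l.
Proof. unfold sumw; induction l; simpl; [lra|rewrite IHl; lra]. Qed.
Lemma sumw_nonneg {A} (f : A -> R) l : (forall x, 0 <= f x) -> 0 <= sumw f l.
Proof. unfold sumw; induction l; simpl; intros H; [lra|pose proof (H a); specialize (IHl H); lra]. Qed.

Lemma words_S n f : sumw f (words (S n)) =
  sumw (fun w => f (true :: w)) (words n) + sumw (fun w => f (false :: w)) (words n).
Proof. simpl. rewrite sumw_app, !sumw_map. reflexivity. Qed.

Lemma words_split m j f : sumw f (words (m + j)) =
  sumw (fun u => sumw (fun v => f (u ++ v)) (words j)) (words m).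
Proof.
  revert f; induction m; intros f.
  - simpl. unfold sumw at 2. simpl. rewrite Rplus_0_r. reflexivity.
  - change (S m + j)%nat with (S (m + j)). rewrite !words_S, !IHm. reflexivity.
Qed.

Lemma words_length n w : In w (words n) -> length w = n.
Proof.
  revert w; induction n; simpl; intros w H.
  - destruct H as [<-|[]]; reflexivity.
  - apply in_app_or in H; destruct H as [H|H]; apply in_map_iff in H;
    destruct H as [u [<- Hu]]; simpl; rewrite (IHn u Hu); reflexivity.
Qed.

Lemma sumw_zero {A} (l : list A) : sumw (fun _ => 0) l = 0.
Proof. unfold sumw; induction l; simpl; [lra|rewrite IHl; lra]. Qed.

Lemma sum_indicator j (g : list bool -> R) w0 : length w0 = j ->
  sumw (fun v => if list_bool_eqb v w0 then g v else 0) (words j) = g w0.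
Proof.
  revert g w0; induction j; intros g w0 Hl.
  - destruct w0; [|discriminate]. unfold sumw; simpl. lra.
  - destruct w0 as [|b w0]; [discriminate|]. simpl in Hl. injection Hl as Hl.
    rewrite words_S.
    assert (E : forall c v, list_bool_eqb (c :: v) (b :: w0) = Bool.eqb c b && list_bool_eqb v w0).
    { intros c v. unfold list_bool_eqb.
      destruct (list_eq_dec bool_dec (c :: v) (b :: w0)) as [e|e];
      destruct (list_eq_dec bool_dec v w0) as [e'|e'];
      destruct c, b; simpl; try congruence; try (injection e; congruence); try reflexivity. }
    destruct b.
    + rewrite (sumw_ext_in _ (fun v => if list_bool_eqb v w0 then g (true :: v) else 0)).
      rewrite (sumw_ext_in (fun w => if list_bool_eqb (false :: w) (true :: w0) then g (false :: w) else 0) (fun _ => 0)).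
      rewrite sumw_zero, IHj by auto. lra.
      intros; rewrite E; reflexivity.
      intros; rewrite E; reflexivity.
    + rewrite (sumw_ext_in _ (fun _ => 0)).
      rewrite (sumw_ext_in (fun w => if list_bool_eqb (false :: w) (false :: w0) then g (false :: w) else 0) (fun v => if list_bool_eqb v w0 then g (false :: v) else 0)).
      rewrite sumw_zero, IHj by auto. lra.
      intros; rewrite E; reflexivity.
      intros; rewrite E; reflexivity.
Qed.

Lemma weight_app p u v : weight p (u ++ v) = weight p u * weight p v.
Proof. unfold weight; induction u; simpl; [lra|rewrite IHu; lra]. Qed.

Lemma weight_nonneg p w : 0 <= p <= 1 -> 0 <= weight p w.
Proof. intros Hp; unfold weight; induction w; simpl; [lra|].
  apply Rmult_le_pos; auto. destruct a; lra. Qed.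

Lemma weight_pat p k : weight p (pat k) = p ^ k * (1 - p).
Proof. unfold pat. rewrite weight_app. induction k; unfold weight in *; simpl in *; [lra|]. rewrite Rmult_assoc, IHk. ring. Qed.

Lemma lbe_true u v : list_bool_eqb u v = true <-> u = v.
Proof. unfold list_bool_eqb; destruct (list_eq_dec bool_dec u v); split; congruence. Qed.

Lemma forallb_ext_in {A} (f g : A -> bool) l : (forall x, In x l -> f x = g x) -> forallb f l = forallb g l.
Proof. induction l; simpl; intros H; auto. rewrite H, IHl; auto. Qed.

Definition strict k w := forallb (fun j => negb (ends_with_pat k (firstn j w))) (seq 0 (length w)).
Definition avoid k w := strict k w && negb (ends_with_pat k w).

Lemma first_hit_eq k w : first_hit k w = ends_with_pat k w && strict k w.
Proof. reflexivity. Qed.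

Lemma strict_app k u v : strict k (u ++ v) =
  strict k u && forallb (fun j => negb (ends_with_pat k (firstn j (u ++ v)))) (seq (length u) (length v)).
Proof.
  unfold strict. rewrite length_app, seq_app, forallb_app. simpl. f_equal.
  apply forallb_ext_in. intros j Hj. apply in_seq in Hj.
  rewrite firstn_app. replace (j - length u)%nat with 0%nat by lia. simpl. rewrite app_nil_r. reflexivity.
Qed.

Lemma ends_app_true k w : ends_with_pat k (w ++ true :: nil) = false.
Proof.
  destruct (ends_with_pat k (w ++ true :: nil)) eqn:E; auto.
  unfold ends_with_pat in E. apply andb_prop in E. destruct E as [_ E].
  apply lbe_true in E.
  pose proof (firstn_skipn (length (w ++ true :: nil) - S k) (w ++ true :: nil)) as F.
  rewrite E in F. unfold pat in F. rewrite app_assoc in F.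
  apply app_inj_tail in F. destruct F; discriminate.
Qed.

Lemma ends_app_pat k u v : length v = S k -> ends_with_pat k (u ++ v) = list_bool_eqb v (pat k).
Proof.
  intros Hv. unfold ends_with_pat. rewrite length_app, Hv.
  replace (Nat.leb (S k) (length u + S k)) with true by (symmetry; apply Nat.leb_le; lia).
  simpl. replace (length u + S k - S k)%nat with (length u) by lia.
  rewrite skipn_app, skipn_all, Nat.sub_diag. reflexivity.
Qed.

Lemma firstn_repeat_le {A} (x : A) i n : (i <= n)%nat -> firstn i (repeat x n) = repeat x i.
Proof. revert n; induction i; intros n H; simpl; auto. destruct n; [lia|]. simpl. rewrite IHi by lia. auto. Qed.

Lemma first_hit_app k u v : length v = S k ->
  first_hit k (u ++ v) = avoid k u && list_bool_eqb v (pat k).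
Proof.
  intros Hv. rewrite first_hit_eq, ends_app_pat by auto.
  destruct (list_bool_eqb v (pat k)) eqn:E; [|rewrite andb_false_r; reflexivity].
  apply lbe_true in E. subst v. rewrite andb_true_l, andb_true_r, strict_app, Hv.
  unfold avoid. f_equal. simpl. rewrite firstn_app, Nat.sub_diag, firstn_all. simpl. rewrite app_nil_r.
  rewrite (forallb_ext_in _ (fun _ => true)). 2:{
    intros j Hj. apply in_seq in Hj. rewrite firstn_app, firstn_all2 by lia.
    unfold pat. rewrite firstn_app, repeat_length, firstn_repeat_le by lia.
    replace (j - length u - k)%nat with 0%nat by lia. simpl. rewrite app_nil_r.
    replace (j - length u)%nat with (S (j - length u - 1)) by lia.
    change (repeat true (S (j - length u - 1))) with (true :: repeat true (j - length u - 1)); rewrite repeat_cons, app_assoc, ends_app_true. reflexivity. }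
  assert (FT : forall l : list nat, forallb (fun _ => true) l = true) by (induction l; simpl; auto). rewrite FT. apply andb_true_r.
Qed.

Lemma strict_snoc k u b : strict k (u ++ b :: nil) = avoid k u.
Proof.
  rewrite strict_app. simpl. rewrite firstn_app, Nat.sub_diag, firstn_all. simpl.
  rewrite app_nil_r, andb_true_r. reflexivity.
Qed.

Lemma avoid_snoc k u b : avoid k (u ++ b :: nil) = avoid k u && negb (ends_with_pat k (u ++ b :: nil)).
Proof. unfold avoid at 1. rewrite strict_snoc. reflexivity. Qed.

Definition Tp p k n := sumw (fun w => if avoid k w then weight p w else 0) (words n).

Lemma probY_sumw p k n : probY p k n = sumw (fun w => if first_hit k w then weight p w else 0) (words n).
Proof. unfold probY. rewrite <- sumw_filter. reflexivity. Qed.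

Lemma T0 p k : Tp p k 0 = 1.
Proof. unfold Tp, sumw. simpl. rewrite Rplus_0_r. reflexivity. Qed.

Lemma a0 p k : probY p k 0 = 0.
Proof. unfold probY. simpl. reflexivity. Qed.

Lemma step p k n : probY p k (S n) + Tp p k (S n) = Tp p k n.
Proof.
  rewrite probY_sumw. unfold Tp. rewrite <- Nat.add_1_r, !words_split, <- sumw_plus.
  apply sumw_ext_in. intros u _. unfold sumw at 1 2. simpl.
  rewrite !first_hit_eq, !strict_snoc, !avoid_snoc, !weight_app.
  unfold weight at 2 4 6 8. simpl.
  destruct (avoid k u), (ends_with_pat k (u ++ true :: nil)), (ends_with_pat k (u ++ false :: nil)); simpl; ring.
Qed.

Lemma aB p k n : probY p k (n + S k) = (1 - p) * p ^ k * Tp p k n.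
Proof.
  rewrite probY_sumw, words_split. unfold Tp. rewrite <- sumw_scal.
  apply sumw_ext_in. intros u _.
  rewrite (sumw_ext_in _ (fun v => if list_bool_eqb v (pat k) then (if avoid k u then weight p u * weight p v else 0) else 0)).
  - rewrite sum_indicator. rewrite weight_pat. destruct (avoid k u); ring.
    unfold pat. rewrite length_app, repeat_length. simpl. lia.
  - intros v Hv. apply words_length in Hv. rewrite first_hit_app by auto. rewrite weight_app.
    destruct (avoid k u), (list_bool_eqb v (pat k)); reflexivity.
Qed.

Lemma a_small p k n : (n <= k)%nat -> probY p k n = 0.
Proof.
  intros H. rewrite probY_sumw. rewrite (sumw_ext_in _ (fun _ => 0)). apply sumw_zero.
  intros w Hw. apply words_length in Hw. rewrite first_hit_eq. unfold ends_with_pat.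
  replace (Nat.leb (S k) (length w)) with false. reflexivity.
  symmetry. apply Nat.leb_gt. lia.
Qed.

Lemma a_nonneg p k n : 0 <= p <= 1 -> 0 <= probY p k n.
Proof. intros. rewrite probY_sumw. apply sumw_nonneg. intros w; destruct first_hit; [apply weight_nonneg; auto|lra]. Qed.

Lemma T_nonneg p k n : 0 <= p <= 1 -> 0 <= Tp p k n.
Proof. intros. apply sumw_nonneg. intros w; destruct avoid; [apply weight_nonneg; auto|lra]. Qed.

Lemma lim_inv_S : is_lim_seq (fun n => / (INR n + 1)) 0.
Proof.
  assert (H : is_lim_seq (fun n => INR (S n)) p_infty).
  { apply (is_lim_seq_incr_1 INR p_infty). apply is_lim_seq_INR. }
  apply is_lim_seq_inv in H; [|discriminate].
  eapply is_lim_seq_ext; [|exact H]. intros n; cbv beta. rewrite <- S_INR. reflexivity.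
Qed.

Lemma lim_ratio j : is_lim_seq (fun n => (1 + / (INR n + 1)) ^ j) 1.
Proof.
  induction j.
  - apply is_lim_seq_ext with (fun _ => 1). intros; reflexivity. apply is_lim_seq_const.
  - assert (B : is_lim_seq (fun n => 1 + / (INR n + 1)) 1).
    { assert (B0 := is_lim_seq_plus' _ _ 1 0 (is_lim_seq_const 1) lim_inv_S). rewrite Rplus_0_r in B0. exact B0. }
    replace (Finite 1) with (Finite (1 * 1)) by (f_equal; ring).
    apply is_lim_seq_ext with (fun n => (1 + / (INR n + 1)) * (1 + / (INR n + 1)) ^ j).
    intros; reflexivity. apply is_lim_seq_mult'; auto.
Qed.

Lemma ex_series_poly_geom j r : 0 < r < 1 -> ex_series (fun n => INR n ^ j * r ^ n).
Proof.
  intros Hr.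
  set (b := fun n => (INR n + 1) ^ j * r ^ n).
  assert (bpos : forall n, 0 < b n).
  { intros n. unfold b. apply Rmult_lt_0_compat; apply pow_lt; [pose proof (pos_INR n); lra|lra]. }
  assert (Hb : ex_series (fun n => Rabs (b n))).
  { apply ex_series_DAlembert with r. lra. intros n; specialize (bpos n); lra.
    apply is_lim_seq_ext with (fun n => (1 + / (INR n + 1)) ^ j * r).
    - intros n. rewrite Rabs_pos_eq.
      2:{ unfold Rdiv. apply Rmult_le_pos. apply Rlt_le, bpos. apply Rlt_le, Rinv_0_lt_compat, bpos. }
      unfold b. rewrite S_INR.
      assert (Hn : 0 < INR n + 1) by (pose proof (pos_INR n); lra).
      replace (1 + / (INR n + 1)) with ((INR n + 1 + 1) * / (INR n + 1)) by (field; lra).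
      rewrite Rpow_mult_distr, pow_inv. simpl pow at 3.
      change (r ^ S n) with (r * r ^ n). assert (B1 := pow_nonzero (INR n + 1) j ltac:(lra)). assert (B2 := pow_nonzero r n ltac:(lra)). generalize dependent ((INR n + 1) ^ j). generalize dependent (r ^ n). intros. field. auto.
    - replace (Finite r) with (Finite (1 * r)) by (f_equal; ring).
      apply is_lim_seq_mult'. apply lim_ratio. apply is_lim_seq_const. }
  apply (@ex_series_le R_AbsRing R_CompleteNormedModule) with (fun n => Rabs (b n)); auto.
  intros n. unfold norm; simpl. unfold abs; simpl.
  pose proof (pos_INR n).
  rewrite !Rabs_pos_eq. unfold b. apply Rmult_le_compat_r. apply pow_le; lra.
  apply pow_incr; lra. apply Rlt_le, bpos. apply Rmult_le_pos; apply pow_le; lra.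
Qed.
Lemma solve_lin q X Y z : q <> 0 -> X = q * (Y + z) -> z = X / q - Y.
Proof. intros Hq H. rewrite H. field. auto. Qed.
Lemma solve_lin0 q X z : q <> 0 -> X = q * z -> z = X / q.
Proof. intros Hq H. rewrite H. field. auto. Qed.
Lemma alg (q K s0 s1 s2 s3 s4 : R) : q <> 0 ->
  let c := K + 1 in
  (1) = q * (s0) ->
  (1 * s0) = q * (1 * c ^ 1 * s0 + s1) ->
  (1 * s0 + 2 * s1) = q * (1 * c ^ 2 * s0 + 2 * c ^ 1 * s1 + s2) ->
  (1 * s0 + 3 * s1 + 3 * s2) = q * (1 * c ^ 3 * s0 + 3 * c ^ 2 * s1 + 3 * c ^ 1 * s2 + s3) ->
  (1 * s0 + 4 * s1 + 6 * s2 + 4 * s3) = q * (1 * c ^ 4 * s0 + 4 * c ^ 3 * s1 + 6 * c ^ 2 * s2 + 4 * c ^ 1 * s3 + s4) ->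
  1 * s0 = 1 / q /\
  1 * s0 + 2 * s1 = 2 / q ^ 2 - (2 * K + 1) / q /\
  1 * s0 + 3 * s1 + 3 * s2 = 6 / q ^ 3 - (12 * K + 6) / q ^ 2 + (3 * K ^ 2 + 3 * K + 1) / q /\
  1 * s0 + 4 * s1 + 6 * s2 + 4 * s3 = 24 / q ^ 4 - (72 * K + 36) / q ^ 3 + (48 * K ^ 2 + 48 * K + 14) / q ^ 2 - (4 * K ^ 3 + 6 * K ^ 2 + 4 * K + 1) / q /\
  1 * s0 + 5 * s1 + 10 * s2 + 10 * s3 + 5 * s4 = 120 / q ^ 5 - 240 * (2 * K + 1) / q ^ 4 + 30 * (18 * K ^ 2 + 18 * K + 5) / q ^ 3 - 10 * (16 * K ^ 3 + 24 * K ^ 2 + 14 * K + 3) / q ^ 2 + ((K + 1) ^ 5 - K ^ 5) / q.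
Proof.
  intros Hq c E0 E1 E2 E3 E4.
  apply solve_lin0 in E0; auto.
  apply solve_lin in E1; auto.
  apply solve_lin in E2; auto.
  apply solve_lin in E3; auto.
  apply solve_lin in E4; auto.
  subst s4. subst s3. subst s2. subst s1. subst s0. unfold c.
  repeat split; field; auto.
Qed.

Ltac Rring := match goal with |- ?A = ?B => change (@eq R A B) end; ring.

Lemma is_series_Rscal c a l : is_series a l -> is_series (fun n => c * a n) (c * l).
Proof. intros H. exact (is_series_scal c a l H). Qed.
Lemma is_series_Rplus a b la lb : is_series a la -> is_series b lb -> is_series (fun n => a n + b n) (la + lb).
Proof. intros H1 H2. exact (is_series_plus _ _ _ _ H1 H2). Qed.
Lemma is_series_Rminus a b la lb : is_series a la -> is_series b lb -> is_series (fun n => a n - b n) (la - lb).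
Proof. intros H1 H2. exact (is_series_minus _ _ _ _ H1 H2). Qed.

Lemma pow_le1 x n : 0 <= x <= 1 -> 0 <= x ^ n <= 1.
Proof. intros H; induction n; simpl; [lra|]. split. apply Rmult_le_pos; lra.
  replace 1 with (1 * 1) by ring. apply Rmult_le_compat; lra. Qed.

Lemma q_bounds p k : 0 < p < 1 -> 0 < (1 - p) * p ^ k < 1.
Proof. intros Hp. pose proof (pow_le1 p k ltac:(lra)). pose proof (pow_lt p k ltac:(lra)).
  split. apply Rmult_lt_0_compat; lra.
  apply Rle_lt_trans with ((1 - p) * 1). apply Rmult_le_compat_l; lra. lra. Qed.

Lemma T_dec p k n : 0 < p < 1 -> Tp p k (S n) <= Tp p k n.
Proof. intros Hp. pose proof (step p k n). pose proof (a_nonneg p k (S n) ltac:(lra)). lra. Qed.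

Lemma T_mono p k i n : 0 < p < 1 -> Tp p k (i + n) <= Tp p k n.
Proof. intros Hp. induction i; simpl; [lra|]. pose proof (T_dec p k (i + n) Hp). lra. Qed.

Lemma T_le1 p k n : 0 < p < 1 -> Tp p k n <= 1.
Proof. intros Hp. pose proof (T_mono p k n 0 Hp). rewrite Nat.add_0_r, T0 in H. auto. Qed.

Lemma T_geom p k n : 0 < p < 1 -> Tp p k (n + k) <= (1 - (1 - p) * p ^ k) ^ n.
Proof.
  intros Hp. pose proof (q_bounds p k Hp). induction n.
  - simpl. apply T_le1; auto.
  - pose proof (step p k (n + k)).
    replace (S (n + k)) with (n + S k)%nat in H0 by lia. rewrite aB in H0.
    pose proof (T_mono p k k n Hp). rewrite Nat.add_comm in H1.
    pose proof (T_nonneg p k n ltac:(lra)).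
    replace (S n + k)%nat with (n + S k)%nat by lia. simpl.
    assert (Tp p k (n + S k) <= (1 - (1 - p) * p ^ k) * Tp p k (n + k)) by nra.
    eapply Rle_trans; [exact H3|]. apply Rmult_le_compat_l; lra.
Qed.

Lemma T_bound p k n : 0 < p < 1 -> Tp p k n <= / (1 - (1 - p) * p ^ k) ^ k * (1 - (1 - p) * p ^ k) ^ n.
Proof.
  intros Hp. pose proof (q_bounds p k Hp). set (r := 1 - (1 - p) * p ^ k).
  assert (Hr : 0 < r < 1) by (unfold r; lra).
  assert (rk : 0 < r ^ k) by (apply pow_lt; lra).
  destruct (le_lt_dec k n) as [Hkn|Hkn].
  - replace n with ((n - k) + k)%nat by lia. rewrite pow_add.
    pose proof (T_geom p k (n - k) Hp). fold r in H0.
    replace (/ r ^ k * (r ^ (n - k) * r ^ k)) with (r ^ (n - k)) by (field; lra). auto.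
  - pose proof (T_le1 p k n Hp).
    assert (r ^ k <= r ^ n).
    { replace k with ((k - n) + n)%nat by lia. rewrite pow_add.
      pose proof (pow_le1 r (k - n) ltac:(lra)). pose proof (pow_lt r n ltac:(lra)). nra. }
    apply Rle_trans with 1; auto.
    apply (Rmult_le_reg_l (r ^ k)); auto. rewrite <- Rmult_assoc, Rinv_r by lra. lra.
Qed.

Lemma ex_S p k j : 0 < p < 1 -> ex_series (fun n => INR n ^ j * Tp p k n).
Proof.
  intros Hp. pose proof (q_bounds p k Hp). set (r := 1 - (1 - p) * p ^ k).
  assert (Hr : 0 < r < 1) by (unfold r; lra).
  apply (@ex_series_le R_AbsRing R_CompleteNormedModule) with (fun n => / r ^ k * (INR n ^ j * r ^ n)).
  - intros n. unfold norm; simpl. unfold abs; simpl.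
    pose proof (pos_INR n). pose proof (T_nonneg p k n ltac:(lra)).
    assert (0 <= INR n ^ j) by (apply pow_le; lra).
    rewrite Rabs_pos_eq by (apply Rmult_le_pos; lra).
    pose proof (T_bound p k n Hp) as TB. fold r in TB. nra.
  - apply (ex_series_scal_l (/ r ^ k) (fun n => INR n ^ j * r ^ n)). apply ex_series_poly_geom; auto.
Qed.

Definition sS p k j := Series (fun n => INR n ^ j * Tp p k n).
Fixpoint pe (cs : list R) (j : nat) (x : R) : R :=
  match cs with nil => 0 | c :: cs => c * x ^ j + pe cs (S j) x end.
Fixpoint pS (s : nat -> R) (cs : list R) (j : nat) : R :=
  match cs with nil => 0 | c :: cs => c * s j + pS s cs (S j) end.

Lemma pe_series p k cs j : 0 < p < 1 ->
  is_series (fun n => pe cs j (INR n) * Tp p k n) (pS (sS p k) cs j).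
Proof.
  intros Hp. revert j; induction cs as [|c cs IH]; intros j; simpl.
  - pose proof (is_series_Rscal 0 _ _ (Series_correct _ (ex_S p k 0 Hp))).
    rewrite Rmult_0_l in H. eapply is_series_ext; [|exact H]. intros n; simpl; ring.
  - pose proof (is_series_Rplus _ _ _ _ (is_series_Rscal c _ _ (Series_correct _ (ex_S p k j Hp))) (IH (S j))).
    eapply is_series_ext; [|exact H]. intros n; simpl; ring.
Qed.

Definition binl (c : R) (m : nat) : list R :=
  match m with
  | 0%nat => 1 :: nil
  | 1%nat => c :: 1 :: nil
  | 2%nat => c ^ 2 :: 2 * c :: 1 :: nil
  | 3%nat => c ^ 3 :: 3 * c ^ 2 :: 3 * c :: 1 :: nil
  | 4%nat => c ^ 4 :: 4 * c ^ 3 :: 6 * c ^ 2 :: 4 * c :: 1 :: nil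
  | 5%nat => c ^ 5 :: 5 * c ^ 4 :: 10 * c ^ 3 :: 10 * c ^ 2 :: 5 * c :: 1 :: nil
  | _ => nil
  end.

Lemma binl_ok c m x : (m <= 5)%nat -> pe (binl c m) 0 x = (x + c) ^ m.
Proof.
  intros H. do 6 (destruct m as [|m]; [simpl; ring|]). lia.
Qed.

Lemma eq_i p k m : 0 < p < 1 -> (m <= 5)%nat ->
  is_series (fun n => INR n ^ m * probY p k n) (pS (sS p k) (binl 1 m) 0 - sS p k m + 0 ^ m).
Proof.
  intros Hp Hm.
  pose proof (pe_series p k (binl 1 m) 0 Hp) as HA.
  pose proof (Series_correct _ (ex_S p k m Hp)) as HB. fold (sS p k m) in HB.
  assert (HB' : is_series (fun n => INR (S n) ^ m * Tp p k (S n)) (sS p k m - 0 ^ m)).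
  { apply (is_series_incr_1 (fun n => INR n ^ m * Tp p k n)).
    match goal with |- is_series _ ?l => replace l with (sS p k m); [exact HB|] end.
    rewrite T0. simpl INR. change plus with Rplus. ring. }
  pose proof (is_series_Rminus _ _ _ _ HA HB') as HC.
  apply (is_series_decr_1 (fun n => INR n ^ m * probY p k n)).
  rewrite a0. change plus with Rplus. change opp with Ropp.
  replace (pS (sS p k) (binl 1 m) 0 - sS p k m + 0 ^ m + - (INR 0 ^ m * 0))
    with (pS (sS p k) (binl 1 m) 0 - (sS p k m - 0 ^ m)) by ring.
  eapply is_series_ext; [|exact HC]. intros n. cbv beta.
  rewrite binl_ok by auto. pose proof (step p k n). rewrite S_INR. 
  replace (probY p k (S n)) with (Tp p k n - Tp p k (S n)) by lra. match goal with |- ?A = ?B => change (@eq R A B) end; ring.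
Qed.

Lemma plus_opp0 (x y : R) : y = 0 -> x = plus x (opp y).
Proof. intros ->. change (x = x + - 0). ring. Qed.

Lemma eq_ii p k m : 0 < p < 1 -> (m <= 5)%nat ->
  is_series (fun n => INR n ^ m * probY p k n) ((1 - p) * p ^ k * pS (sS p k) (binl (INR k + 1) m) 0).
Proof.
  intros Hp Hm.
  pose proof (is_series_Rscal ((1 - p) * p ^ k) _ _ (pe_series p k (binl (INR k + 1) m) 0 Hp)) as HA.
  apply (is_series_decr_n (fun n => INR n ^ m * probY p k n) (S k)). lia.
  match goal with |- is_series _ ?l => replace l with ((1 - p) * p ^ k * pS (sS p k) (binl (INR k + 1) m) 0) end.
  2:{ apply plus_opp0. simpl. rewrite (sum_n_ext_loc _ (fun _ => 0)). rewrite sum_n_const. Rring.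
      intros n Hn. rewrite a_small by lia. Rring. }
  eapply is_series_ext; [|exact HA]. intros n. cbv beta.
  rewrite binl_ok by auto. rewrite (Nat.add_comm (S k) n), aB, plus_INR, S_INR. Rring.
Qed.

Lemma is_series_eqv (f : nat -> R) l l' : is_series f l -> l = l' -> is_series f l'.
Proof. intros H ->; exact H. Qed.

Lemma E_m p k m : 0 < p < 1 -> (m <= 5)%nat ->
  pS (sS p k) (binl 1 m) 0 - sS p k m + 0 ^ m = (1 - p) * p ^ k * pS (sS p k) (binl (INR k + 1) m) 0.
Proof.
  intros Hp Hm. pose proof (is_series_unique _ _ (eq_i p k m Hp Hm)).
  pose proof (is_series_unique _ _ (eq_ii p k m Hp Hm)). congruence.
Qed.

Theorem corollary3p5 (p : R) (k : nat) :
  0 < p < 1 -> (1 <= k)%nat ->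
  let q := (1 - p) * p ^ k in
  let K := INR k in
  moment_is p k 1 (1 / q) /\
  moment_is p k 2 (2 / q ^ 2 - (2 * K + 1) / q) /\
  moment_is p k 3 (6 / q ^ 3 - (12 * K + 6) / q ^ 2
                   + (3 * K ^ 2 + 3 * K + 1) / q) /\
  moment_is p k 4 (24 / q ^ 4 - (72 * K + 36) / q ^ 3
                   + (48 * K ^ 2 + 48 * K + 14) / q ^ 2
                   - (4 * K ^ 3 + 6 * K ^ 2 + 4 * K + 1) / q) /\
  moment_is p k 5 (120 / q ^ 5 - 240 * (2 * K + 1) / q ^ 4
                   + 30 * (18 * K ^ 2 + 18 * K + 5) / q ^ 3
                   - 10 * (16 * K ^ 3 + 24 * K ^ 2 + 14 * K + 3) / q ^ 2
                   + ((K + 1) ^ 5 - K ^ 5) / q).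
Proof.
  intros Hp Hk q K.
  pose proof (q_bounds p k Hp) as Hq. fold q in Hq.
  pose proof (E_m p k 0 Hp ltac:(lia)) as E0.
  pose proof (E_m p k 1 Hp ltac:(lia)) as E1.
  pose proof (E_m p k 2 Hp ltac:(lia)) as E2.
  pose proof (E_m p k 3 Hp ltac:(lia)) as E3.
  pose proof (E_m p k 4 Hp ltac:(lia)) as E4.
  fold q K in E0, E1, E2, E3, E4. simpl in E0, E1, E2, E3, E4.
  destruct (alg q K (sS p k 0) (sS p k 1) (sS p k 2) (sS p k 3) (sS p k 4) ltac:(lra))
    as [C1 [C2 [C3 [C4 C5]]]]; try lra.
  unfold moment_is.
  repeat split; (eapply is_series_eqv; [apply eq_i; [exact Hp|]|]).
  all: try lia.
  all: match goal with |- _ = ?t => set (tt := t) in * end; simpl; fold q K; lra.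
Qed.
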